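(* Let $0<r_j<\infty$ and $0<s_j<\infty$ for $j=1,\dots,n$, let $\rho=\otimes_{j=1}^n\gamma(r_j)$ and $\sigma=\otimes_{j=1}^n\gamma(s_j)$. Let $\alpha>1$ and let $V_{\sigma(\alpha-1)}$ and $V_{\rho(\alpha)}$ denote the covariance matrices of the gaussian states $\sigma^{\alpha-1}/\operatorname{tr}\sigma^{\alpha-1}$ and $\rho^\alpha/\operatorname{tr}\rho^\alpha$ respectively. Then $$V_{\sigma(\alpha-1)}>V_{\rho(\alpha)}\iff\alpha<\min\left\{\frac{s_j}{s_j-r_j}: j\in\{1,\dots,n\}\text{ such that } r_j<s_j\right\},$$ where the minimum of the empty set is $+\infty$.
   Context: One-mode Fock space: $\ell^2(\mathbb{Z}_{\ge 0})$ with orthonormal particle basis $\{|k\rangle\}$; $n$-mode space is the $n$-fold tensor product. For $0<s<\infty$, $\gamma(s)=(1-e^{-s})\sum_{k\ge0}e^{-ks}|k\rangle\langle k|$. For $\beta>0$, $\gamma(\mathbf{s})^\beta/\operatorname{tr}\gamma(\mathbf{s})^\beta=\otimes_j\gamma(\beta s_j)$, and the covariance matrix of the gaussian state $\otimes_j\gamma(t_j)$ is the $2n\times 2n$ matrix $\frac12\operatorname{diag}(\coth\frac{t_1}{2},\dots,\coth\frac{t_n}{2})\otimes I_2$. For real symmetric matrices, $A>B$ means $A-B$ is positive definite. *)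

(* Defs.v *)
From HB Require Import structures.
From mathcomp Require Import all_boot all_order all_algebra.
From mathcomp Require Import mxtens.
From mathcomp Require Import all_classical all_reals all_analysis.
Set Implicit Arguments. Unset Strict Implicit. Unset Printing Implicit Defensive.
Import Order.TTheory GRing.Theory Num.Theory.
Local Open Scope ring_scope.

Definition coth {R : realType} (x : R) : R :=
  (expR x + expR (- x)) / (expR x - expR (- x)).

(* Covariance matrix of the n-mode gaussian state (x)_j gamma(t_j), as given
   in the context: (1/2) diag(coth(t_1/2),...,coth(t_n/2)) (x) I_2. *)
Definition gauss_cov {R : realType} (n : nat) (t : 'I_n -> R) : 'M[R]_(n * 2) :=
  (2^-1) *: (diag_mx (\row_(j < n) coth (t j / 2)) *t (1%:M : 'M[R]_2)).

Definition posdef {R : realType} (m : nat) (A : 'M[R]_m) : Prop :=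
  forall v : 'cV[R]_m, v != 0 -> 0 < (v^T *m A *m v) ord0 ord0.

Definition mx_gt {R : realType} (m : nat) (A B : 'M[R]_m) : Prop :=
  posdef (A - B).

(* Covariance matrix of sigma^beta / tr sigma^beta for sigma = (x)_j gamma(s_j):
   this state equals (x)_j gamma(beta s_j). *)
Definition cov_power {R : realType} (n : nat) (s : 'I_n -> R) (beta : R) : 'M[R]_(n * 2) :=
  gauss_cov (fun j => beta * s j).

(* Main.v *)
Require Import Defs.
From HB Require Import structures.
From mathcomp Require Import all_boot all_order all_algebra.
From mathcomp Require Import mxtens.
From mathcomp Require Import all_classical all_reals all_analysis.
From mathcomp Require Import ring lra.
Import Order.TTheory GRing.Theory Num.Theory.
Local Open Scope ring_scope.

Lemma coth_lt (R : realType) (x y : R) : 0 < x -> x < y -> coth y < coth x.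
Proof.
move=> x0 xy.
have y0 : 0 < y by apply: lt_trans xy.
rewrite /coth !expRN.
have a1 : 1 < expR x by rewrite expR_gt1.
have ab : expR x < expR y by rewrite ltr_expR.
move: a1 ab; set a := expR x; set b := expR y => a1 ab.
have a0 : 0 < a by lra.
have b0 : 0 < b by lra.
have e (c : R) : 1 < c -> (c + c^-1) / (c - c^-1) = (c * c + 1) / (c * c - 1).
  move=> c1; field; rewrite ?subr_eq0; apply/andP; split; try apply/negP => /eqP; nra.
rewrite !e; try lra.
have q1 : 0 < a * a - 1 by nra.
have q2 : 0 < b * b - 1 by nra.
rewrite ltr_pdivrMr // mulrAC ltr_pdivlMr //.
nra.
Qed.

Lemma qf_diag (R : realType) m (e : 'rV[R]_m) (v : 'cV[R]_m) :
  (v^T *m diag_mx e *m v) ord0 ord0 = \sum_k e 0 k * v k 0 ^+ 2.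
Proof.
rewrite mul_mx_diag mxE; apply: eq_bigr => k _; rewrite !mxE; ring.
Qed.

Lemma posdef_diag (R : realType) m (e : 'rV[R]_m) :
  posdef (diag_mx e) <-> forall k, 0 < e 0 k.
Proof.
split.
- move=> H k; have := H (delta_mx k 0).
  rewrite qf_diag (bigD1 k) //= big1 ?addr0.
  + rewrite !mxE !eqxx /= expr1n mulr1; apply.
    apply/negP => /eqP /matrixP /(_ k 0); rewrite !mxE !eqxx /=.
    by move/eqP; rewrite oner_eq0.
  + by move=> i /negPf ik; rewrite !mxE ik /= expr0n /= mulr0.
- move=> H v v0; rewrite qf_diag.
  case: (pickP (fun k => v k 0 != 0)) => [k vk|none].
  + rewrite (bigD1 k) //=; apply: ltr_pwDl.
    * by apply: mulr_gt0 => //; rewrite lt_def sqrf_eq0 vk sqr_ge0.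
    * apply: sumr_ge0 => i _; apply: mulr_ge0; [exact: ltW|exact: sqr_ge0].
  + exfalso; move/negP: v0; apply; apply/eqP/matrixP => i j.
    rewrite ord1 mxE; have := none i; by move/negbFE/eqP.
Qed.

Lemma cov_diff (R : realType) n (s r : 'I_n -> R) (b1 b2 : R) :
  cov_power s b1 - cov_power r b2 =
  diag_mx (\row_k (2^-1 * (coth (b1 * s (mxtens_unindex k).1 / 2)
                            - coth (b2 * r (mxtens_unindex k).1 / 2)))).
Proof.
apply/matrixP => i j.
case: (mxtens_indexP i) => i1 i2; case: (mxtens_indexP j) => j1 j2.
rewrite /cov_power /gauss_cov !mxE !mxtens_indexK /=.
rewrite (inj_eq (can_inj (@mxtens_indexK _ _))) xpair_eqE.
by case: (i1 == j1); case: (i2 == j2); rewrite /= ?mulr1 ?mulr0 ?mulr0n ?mulr1n ?subrr ?mulrBr ?mul0r ?mulr0 ?subrr.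
Qed.

Lemma coth_ltE (R : realType) (x y : R) : 0 < x -> 0 < y -> (coth y < coth x) = (x < y).
Proof.
move=> x0 y0; case: (ltgtP x y) => h.
- exact: coth_lt.
- by apply/negbTE; rewrite -leNgt ltW // coth_lt.
- by rewrite h ltxx.
Qed.

Theorem lemma3p5 (R : realType) (n : nat) (r s : 'I_n -> R)
  (hr : forall j, 0 < r j) (hs : forall j, 0 < s j) (alpha : R) (halpha : 1 < alpha) :
  mx_gt (cov_power s (alpha - 1)) (cov_power r alpha) <->
  (alpha%:E < \big[Order.min/+oo%E]_(j < n | r j < s j) (s j / (s j - r j))%:E)%O.
Proof.
have key j : (0 < 2^-1 * (coth ((alpha - 1) * s j / 2) - coth (alpha * r j / 2)))
   <-> (r j < s j -> alpha < s j / (s j - r j)).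
  have hj := hr j; have sj := hs j.
  rewrite pmulr_rgt0 ?invr_gt0 // subr_gt0 coth_ltE; last 2 first.
    by apply: divr_gt0 => //; apply: mulr_gt0 => //; lra.
    by apply: divr_gt0 => //; apply: mulr_gt0 => //; lra.
  rewrite ltr_pM2r ?invr_gt0 //.
  split.
  - move=> h rs; rewrite ltr_pdivlMr ?subr_gt0 //; nra.
  - move=> h; case: (ltP (r j) (s j)) => rs.
    + have := h rs; rewrite ltr_pdivlMr ?subr_gt0 //; nra.
    + nra.
rewrite /mx_gt cov_diff posdef_diag.
split.
- move=> H; apply/bigmin_gtP; split; first exact: ltry.
  move=> j rs; rewrite lte_fin; apply: (proj1 (key j)) => //.
  have := H (mxtens_index (j, ord0)); rewrite mxE mxtens_indexK; exact.
- move/bigmin_gtP => [_ H] k; rewrite mxE; apply/key => rs.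
  by have := H _ rs; rewrite lte_fin.
Qed.
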